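(* Let $c>0$, $f_s>0$, let $M,N,K\ge1$ be integers, $T_{\max}=(N-1)/f_s$, and $\bm{r}^{\mathrm{mic}}_1,\dots,\bm{r}^{\mathrm{mic}}_M\in\mathbb{R}^3$ with $E_M=\{\bm{r}^{\mathrm{mic}}_m\}$. Let $\kappa=\kappa^{\mathrm{lp}}$ where $\kappa^{\mathrm{lp}}(t)=\operatorname{sinc}(\pi f_s t)$, with $\operatorname{sinc}(u)=\sin(u)/u$ for $u\ne0$ and $\operatorname{sinc}(0)=1$. Then $\Gamma^K$ is amplitude lower-bounded, i.e. there is $C>0$ with $\|\Gamma^K(\bm{a},\bm{r})\|_2\ge C\sum_{k=1}^K a_k$ for all $(\bm{a},\bm{r})\in\mathbb{R}_+^K\times\mathscr{C}^K$.
   Context: $\mathbb{R}_+=[0,+\infty)$, $\|\cdot\|_2$ is the Euclidean norm. For $\bm{r}\in\mathbb{R}^3\setminus E_M$, $\gamma(\bm{r})\in\mathbb{R}^{MN}$ has components $\gamma_{m,n}(\bm{r})=\dfrac{\kappa\big(n/f_s-\|\bm{r}-\bm{r}^{\mathrm{mic}}_m\|_2/c\big)}{4\pi\|\bm{r}-\bm{r}^{\mathrm{mic}}_m\|_2}$, $1\le m\le M$, $0\le n\le N-1$. $\mathscr{C}=\bigcap_{m=1}^M\overline{B(\bm{r}^{\mathrm{mic}}_m,cT_{\max})}\setminus E_M$. $\Gamma^K(\bm{a},\bm{r})=\sum_{k=1}^K a_k\gamma(\bm{r}_k)$. *)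

(* Defs.v *)
From mathcomp Require Import all_boot all_order all_algebra.
From mathcomp Require Import reals trigo.
Set Implicit Arguments. Unset Strict Implicit. Unset Printing Implicit Defensive.
Import Order.TTheory GRing.Theory Num.Theory.
Local Open Scope ring_scope.

Section Defs.
Variable R : realType.

Definition sinc (u : R) : R := if u == 0 then 1 else sin u / u.

Definition kappa_lp (fs t : R) : R := sinc (pi * fs * t).

Definition norm2_3 (v : 'rV[R]_3) : R := Num.sqrt (\sum_(i < 3) (v 0 i) ^+ 2).

Definition gamma_mn (kappa : R -> R) (c fs : R) (M : nat) (mic : 'I_M -> 'rV[R]_3)
  (m : 'I_M) (n : nat) (r : 'rV[R]_3) : R :=
  kappa (n%:R / fs - norm2_3 (r - mic m) / c) / (4 * pi * norm2_3 (r - mic m)).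

Definition Tmax (fs : R) (N : nat) : R := (N.-1)%:R / fs.

Definition in_Cset (c fs : R) (M N : nat) (mic : 'I_M -> 'rV[R]_3) (r : 'rV[R]_3) : Prop :=
  (forall m : 'I_M, norm2_3 (r - mic m) <= c * Tmax fs N) /\
  (forall m : 'I_M, r <> mic m).

Definition Gamma_norm (kappa : R -> R) (c fs : R) (M N K : nat) (mic : 'I_M -> 'rV[R]_3)
  (a : 'I_K -> R) (r : 'I_K -> 'rV[R]_3) : R :=
  Num.sqrt (\sum_(m < M) \sum_(n < N)
     (\sum_(k < K) a k * gamma_mn kappa c fs mic m n (r k)) ^+ 2).

End Defs.

(* Main.v *)
From mathcomp Require Import all_boot all_order all_algebra.
From mathcomp Require Import reals trigo.
From mathcomp Require Import ring lra zify.
Require Import Defs.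
Import Order.TTheory GRing.Theory Num.Theory.
Local Open Scope ring_scope.

Section S.
Variable R : realType.

Lemma sin_piquarter_ge : 1/2 <= sin (pi / 4 : R).
Proof.
have h := sin_mulr2n (pi / 4 : R).
have e : (pi / 4 : R) *+ 2 = pi / 2 by rewrite -mulr_natr; field.
rewrite e sin_pihalf in h.
have hc := cos_le1 (pi / 4 : R).
have hs : 0 < sin (pi / 4 : R).
  apply: sin_gt0_pihalf; have := pi_gt0 R; move=> p; apply/andP; split; lra.
rewrite mulr2n in h.
have := ler_wpM2r (ltW hs) hc; rewrite mul1r.
set cs := cos _ * sin _ in h *. lra.
Qed.

Lemma sin_lin_aux (k : nat) (y : R) : 0 < y -> y <= pi / 2 -> pi / 4 < y * 2 ^+ k ->
  y / 4 <= sin y.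
Proof.
have p0 := pi_gt0 R.
have p2 := pihalf_lt2 R.
elim: k y => [|k IH] y y0 ypi.
  rewrite expr0 mulr1 => hy.
  have : sin (pi / 4) <= sin y.
    rewrite leNgt ltr_sin ?in_itv /=; last 2 first.
      apply/andP; split; lra.
      apply/andP; split; lra.
    rewrite -leNgt; lra.
  have := sin_piquarter_ge; lra.
rewrite exprS => hy.
have e1 : 1 <= (2 : R) ^+ k by rewrite exprn_ege1 //; lra.
case: (ltP (pi / 4) (y * 2 ^+ k)) => h; first exact: IH.
have hy4 : y <= pi / 4.
  apply: le_trans h; rewrite ler_peMr //; lra.
have hyk : pi / 4 < (y + y) * 2 ^+ k by move: hy; have -> : y * (2 * 2 ^+ k) = (y + y) * 2 ^+ k by ring.
have := IH (y + y) ltac:(lra) ltac:(lra) hyk.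
rewrite -mulr2n sin_mulr2n mulr2n.
have hs : 0 <= sin y by apply: sin_ge0_pi; apply/andP; split; lra.
have := ler_wpM2r hs (cos_le1 y); rewrite mul1r mulr2n.
set cs := cos y * sin y. lra.
Qed.

Lemma sin_lin (y : R) : 0 < y -> y <= pi / 2 -> y / 4 <= sin y.
Proof.
move=> y0 ypi.
have p0 := pi_gt0 R.
set k := (Num.trunc (pi / (4 * y))).+1.
apply: (@sin_lin_aux k) => //.
have y4 : 0 < 4 * y by rewrite mulr_gt0 //; lra.
have hk : pi / (4 * y) < k%:R.
  by have := truncn_itv (ltW (divr_gt0 p0 y4)) => /andP[].
have hk2 : (k%:R : R) <= 2 ^+ k.
  by rewrite -natrX ler_nat ltnW // ltn_expl.
have h1 : pi < k%:R * (4 * y) by rewrite -ltr_pdivrMr.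
have h2 : k%:R * (4 * y) <= 2 ^+ k * (4 * y) by rewrite ler_wpM2r // ltW.
have -> : y * 2 ^+ k = 2 ^+ k * (4 * y) / 4 by field.
have : 0 < 2 ^+ k * (4 * y) / 4 - pi / 4.
  have -> : 2 ^+ k * (4 * y) / 4 - pi / 4 = (2 ^+ k * (4 * y) - pi) / 4 by field.
  apply: divr_gt0; lra.
lra.
Qed.

Lemma sin_pi_sub (y : R) : sin (pi - y) = sin y.
Proof. by rewrite sinB sinpi cospi mul0r sub0r mulNr mul1r opprK. Qed.

Lemma sinpi_bd (x : R) : 0 < x < 1 -> x * (1 - x) / 4 <= sin (pi * x) / pi.
Proof.
move=> /andP[x0 x1].
have p0 := pi_gt0 R.
rewrite ler_pdivlMr //.
case: (lerP x (1/2)) => hx.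
  have hpx : pi * x <= pi / 2.
    have -> : pi / 2 = pi * (1/2) :> R by field.
    by rewrite ler_wpM2l // ltW.
  have := @sin_lin (pi * x) ltac:(by rewrite mulr_gt0) hpx.
  have : x * (1 - x) / 4 * pi <= pi * x / 4.
    have -> : x * (1 - x) / 4 * pi = (pi * x / 4) * (1 - x) by ring.
    rewrite ler_piMr //; [| lra]. apply: divr_ge0; [apply: mulr_ge0|]; lra.
  lra.
have e : pi * x = pi - pi * (1 - x) by ring.
rewrite e sin_pi_sub.
have hpx : pi * (1 - x) <= pi / 2.
  have -> : pi / 2 = pi * (1/2) :> R by field.
  rewrite ler_wpM2l // ?ltW //; lra.
have := @sin_lin (pi * (1 - x)) ltac:(by rewrite mulr_gt0 // subr_gt0) hpx.
have : x * (1 - x) / 4 * pi <= pi * (1 - x) / 4.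
  have -> : x * (1 - x) / 4 * pi = (pi * (1 - x) / 4) * x by ring.
  rewrite ler_piMr //; [| lra]. apply: divr_ge0; [apply: mulr_ge0|]; lra.
lra.
Qed.

Definition Alt (L : nat) (x : R) := \sum_(0 <= p < L.+1) (-1) ^+ p / (x + p%:R).

Lemma Alt_bounds L x : 0 < x -> 1 / x - 1 / (x + 1) <= Alt L x <= 1 / x.
Proof.
elim: L x => [|L IH] x x0.
  rewrite /Alt big_nat1 expr0 addr0; apply/andP; split => //.
  rewrite lerBlDr lerDl; apply: divr_ge0; lra.
rewrite /Alt big_nat_recl // expr0 addr0.
have -> : \sum_(0 <= i < L.+1) (-1) ^+ i.+1 / (x + i.+1%:R) = - Alt L (x + 1).
  rewrite /Alt -sumrN; apply: eq_bigr => i _.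
  rewrite exprS mulN1r mulNr; congr (- (_ / _)).
  rewrite [i.+1%:R]mulrS; ring.
have /andP[h1 h2] := IH (x + 1) ltac:(lra).

set a := Alt L (x + 1) in h1 h2 *.
have h3 : 1 / (x + 1 + 1) <= 1 / (x + 1).
  rewrite !div1r lef_pV2 ?posrE; lra.
apply/andP; split; lra.
Qed.


Lemma sin_pi_shift (m : nat) (y : R) : sin (y + pi * m%:R) = (-1) ^+ m * sin y.
Proof. by rewrite mulr_natr (alternatingn (@sinDpi R)). Qed.

Lemma sin_pi_nat (m : nat) : sin (pi * m%:R : R) = 0.
Proof. by rewrite -[pi * _]add0r sin_pi_shift sin0 mulr0. Qed.

Lemma sum_sinc (N : nat) (t : R) : (1 <= N)%N -> 0 <= t -> t <= (N.-1)%:R ->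
  1 / 8 <= \sum_(n < N) sinc (pi * (n%:R - t)).
Proof.
move=> N1 t0 tN.
have p0 := pi_gt0 R.
set j := Num.trunc t.
have /andP[hj1 hj2] := truncn_itv t0.
rewrite -/j in hj1 hj2.
set d := t - j%:R.
have et : t = j%:R + d by rewrite /d; ring.
clearbody d j.
have hjN : (j < N)%N.
  have : (j%:R : R) <= (N.-1)%:R by apply: le_trans tN.
  rewrite ler_nat; lia.
case: (eqVneq d 0) => hd.
  rewrite (bigD1 (Ordinal hjN)) //= big1 ?addr0.
    rewrite et hd addr0 subrr mulr0 /sinc eqxx; lra.
  move=> i hi.
  have hij : (i : nat) != j.
    by apply: contra hi => /eqP h; apply/eqP; apply: val_inj.
  rewrite /sinc et hd addr0.
  have -> : ((pi : R) * (i%:R - j%:R) == 0) = false.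
    apply: negbTE; apply: mulf_neq0; first by rewrite gt_eqF.
    by rewrite subr_eq0 eqr_nat.
  case: (leqP j i) => hji.
    by rewrite -natrB // (sin_pi_nat (i - j)) mul0r.
  have -> : (i%:R - j%:R : R) = - (j - i)%N%:R by rewrite (natrB _ (ltnW hji)) opprB.
  by rewrite mulrN sinN (sin_pi_nat (j - i)) oppr0 mul0r.
have d0 : 0 < d by rewrite lt_neqAle eq_sym hd /=; move: hj1; rewrite et; lra.
have ej1 : (j.+1%:R : R) = j%:R + 1 by rewrite -addn1 natrD.
have d1 : d < 1 by move: hj2; rewrite ej1 et; lra.
have hjN2 : (j.+1 < N)%N.
  have : (j%:R : R) < (N.-1)%:R by move: tN; rewrite et; lra.
  rewrite ltr_nat; lia.
rewrite -(big_mkord xpredT (fun n => sinc (pi * (n%:R - t)))) (big_cat_nat (leq0n j.+1) (ltnW hjN2)) /=.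
have E1 : \sum_(0 <= i < j.+1) sinc (pi * (i%:R - t)) = sin (pi * d) / pi * Alt j d.
  rewrite big_nat_rev /= add0n /Alt mulr_sumr; apply: eq_big_nat => i /andP[_ hi].
  rewrite subSS (natrB _ (hi : (i <= j)%N)).
  have hi0 : (0 : R) <= i%:R by rewrite ler0n.
  rewrite et; set ii := (i%:R : R) in hi0 *; set jj := (j%:R : R).
  have -> : pi * (jj - ii - (jj + d)) = - (pi * d + pi * ii) by ring.
  have nz : - (pi * d + pi * ii) != 0.
    rewrite oppr_eq0 gt_eqF // -mulrDr mulr_gt0 //; lra.
  rewrite /sinc (negbTE nz) sinN /ii sin_pi_shift -/ii.
  set e := (-1) ^+ i. set s := sin (pi * d).
  field; apply/andP; split; [lra| rewrite gt_eqF //; lra].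
have E2 : \sum_(j.+1 <= i < N) sinc (pi * (i%:R - t)) =
    sin (pi * (1 - d)) / pi * Alt (N - j.+2) (1 - d).
  rewrite -{1}[j.+1]add0n big_addn.
  have -> : (N - j.+1 = (N - j.+2).+1)%N by lia.
  rewrite /Alt mulr_sumr; apply: eq_big_nat => i _.
  have hi0 : (0 : R) <= i%:R by rewrite ler0n.
  rewrite natrD ej1 et; set ii := (i%:R : R) in hi0 *; set jj := (j%:R : R).
  have -> : pi * (ii + (jj + 1) - (jj + d)) = pi * (1 - d) + pi * ii by ring.
  have nz : pi * (1 - d) + pi * ii != 0.
    rewrite gt_eqF // -mulrDr mulr_gt0 //; lra.
  rewrite /sinc (negbTE nz) /ii sin_pi_shift -/ii.
  set e := (-1) ^+ i. set s := sin (pi * (1 - d)).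
  field; apply/andP; split; [lra| rewrite gt_eqF //; lra].
rewrite E1 E2.
have /andP[A1 _] := Alt_bounds j d d0.
have /andP[A2 _] := Alt_bounds (N - j.+2) (1 - d) (ltac:(lra) : 0 < 1 - d).
have S1 := sinpi_bd d (ltac:(apply/andP; split; lra) : 0 < d < 1).
have S2 := sinpi_bd (1 - d) (ltac:(apply/andP; split; lra) : 0 < 1 - d < 1).
set P1 := sin (pi * d) / pi in S1 *. set P2 := sin (pi * (1 - d)) / pi in S2 *.
set a1 := Alt j d in A1 *. set a2 := Alt _ (1 - d) in A2 *.
have B1 : d * (1 - d) / 4 * (1 / d - 1 / (d + 1)) <= P1 * a1.
  apply: ler_pM => //.
    apply: divr_ge0; [apply: mulr_ge0|]; lra.
  rewrite subr_ge0 !div1r lef_pV2 ?posrE; lra.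
have B2 : (1 - d) * (1 - (1 - d)) / 4 * (1 / (1 - d) - 1 / (1 - d + 1)) <= P2 * a2.
  apply: ler_pM => //.
    apply: divr_ge0; [apply: mulr_ge0|]; lra.
  rewrite subr_ge0 !div1r lef_pV2 ?posrE; lra.
have e1 : d * (1 - d) / 4 * (1 / d - 1 / (d + 1)) = (1 - d) * (4 * (d + 1))^-1.
  field; apply/andP; split; [|rewrite gt_eqF //]; lra.
rewrite e1 in B1.
have e2 : (1 - d) * (1 - (1 - d)) / 4 * (1 / (1 - d) - 1 / (1 - d + 1)) = d * (4 * (2 - d))^-1.
  field; apply/andP; split; rewrite gt_eqF //; lra.
rewrite e2 in B2.
have C1 : (1 - d) * 8^-1 <= (1 - d) * (4 * (d + 1))^-1.
  apply: ler_wpM2l; first lra.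
  rewrite lef_pV2 ?posrE; lra.
have C2 : d * 8^-1 <= d * (4 * (2 - d))^-1.
  apply: ler_wpM2l; first lra.
  rewrite lef_pV2 ?posrE; lra.
have -> : 1 / 8 = (1 - d) * 8^-1 + d * 8^-1 :> R by field.
lra.
Qed.

Lemma norm2_3_ge0 (v : 'rV[R]_3) : 0 <= norm2_3 v.
Proof. exact: sqrtr_ge0. Qed.

Lemma norm2_3_gt0 (v : 'rV[R]_3) : v != 0 -> 0 < norm2_3 v.
Proof.
move=> hv; rewrite /norm2_3 sqrtr_gt0 lt_neqAle sumr_ge0 ?andbT; last first.
  by move=> i _; rewrite sqr_ge0.
apply: contra hv => /eqP h; apply/eqP/matrixP => i j.
rewrite ord1 mxE.
have := @psumr_eq0P R _ xpredT (fun k : 'I_3 => v 0 k ^+ 2) (fun k _ => sqr_ge0 _) (esym h) j isT.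
by move/eqP; rewrite sqrf_eq0 => /eqP.
Qed.
End S.


Theorem corollary1 (R : realType) (c fs : R) (M N K : nat)
  (mic : 'I_M -> 'rV[R]_3) :
  0 < c -> 0 < fs -> (1 <= M)%N -> (1 <= N)%N -> (1 <= K)%N ->
  exists C : R, 0 < C /\
    forall (a : 'I_K -> R) (r : 'I_K -> 'rV[R]_3),
      (forall k, 0 <= a k) ->
      (forall k, in_Cset c fs N mic (r k)) ->
      C * (\sum_(k < K) a k) <= Gamma_norm (kappa_lp fs) c fs N mic a r.
Proof.
move=> c0 fs0 M1 N1 K1.
have p0 := pi_gt0 R.
set T := Tmax fs N.
have T0 : 0 <= T by rewrite /T /Tmax divr_ge0 // ?ler0n // ltW.
set B := 1 / (32 * pi * (c * (T + 1))).
have B0 : 0 < B by rewrite /B divr_gt0 // !mulr_gt0 //; lra.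
have N0 : (0 : R) < N%:R by rewrite ltr0n.
exists (B / N%:R); split; first exact: divr_gt0.
move=> a r a0 hr.
set m0 := Ordinal M1.
set G := Gamma_norm _ _ _ _ _ _ _.
set X := fun n : 'I_N => \sum_(k < K) a k * gamma_mn (kappa_lp fs) c fs mic m0 n (r k).
have G0 : 0 <= G by exact: sqrtr_ge0.
have step1 : forall n, X n <= G.
  move=> n; apply: le_trans (ler_norm (X n)) _.
  rewrite -sqrtr_sqr /G /Gamma_norm ler_wsqrtr //.
  rewrite (bigD1 m0) //= (bigD1 n) //= -addrA ler_wpDr //.
  by apply: addr_ge0; apply: sumr_ge0 => i _; [rewrite sqr_ge0 | apply: sumr_ge0 => ? _; rewrite sqr_ge0].
have step2 : \sum_(n < N) X n <= N%:R * G.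
  apply: le_trans (ler_sum _ (fun n _ => step1 n)) _.
  by rewrite sumr_const card_ord mulr_natl.
have step3 : \sum_(n < N) X n = \sum_(k < K) a k * \sum_(n < N) gamma_mn (kappa_lp fs) c fs mic m0 n (r k).
  rewrite /X exchange_big /=; apply: eq_bigr => k _; by rewrite mulr_sumr.
have step4 : forall k, B <= \sum_(n < N) gamma_mn (kappa_lp fs) c fs mic m0 n (r k).
  move=> k.
  have [hD hne] := hr k.
  set D := norm2_3 (r k - mic m0).
  have D0 : 0 < D by apply: norm2_3_gt0; rewrite subr_eq0; apply/eqP; exact: hne.
  have DT : D <= c * T by exact: hD.
  set t := fs * D / c.
  have e : forall n : 'I_N, gamma_mn (kappa_lp fs) c fs mic m0 n (r k) =
      sinc (pi * (n%:R - t)) * (4 * pi * D)^-1.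
    move=> n; rewrite /gamma_mn /kappa_lp -/D /t; congr (sinc _ * _).
    field; apply/andP; split; rewrite gt_eqF //.
  rewrite (eq_bigr _ (fun n _ => e n)) -mulr_suml.
  have t0 : 0 <= t by rewrite /t; apply: divr_ge0; [apply: mulr_ge0|]; apply: ltW.
  have tN : t <= (N.-1)%:R.
    rewrite /t ler_pdivrMr // mulrC -ler_pdivlMr //.
    by move: DT; rewrite /T /Tmax mulrA [c * _]mulrC.
  have S := @sum_sinc R N t N1 t0 tN.
  set S0 := \sum_(n < N) _ in S *.
  have h1 : 1 / 8 * (4 * pi * D)^-1 <= S0 * (4 * pi * D)^-1.
    by apply: ler_wpM2r => //; rewrite invr_ge0 mulr_ge0 // ?ltW // mulr_gt0 //; lra.
  apply: le_trans h1.
  rewrite /B.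
  have key : forall P : R, 0 < P -> 1 / 8 * (4 * P * D)^-1 = 1 / (32 * P * D).
    move=> P hP; field; apply/andP; split; rewrite gt_eqF //.
  rewrite (key pi p0).
  rewrite !mul1r lef_pV2 ?posrE ?mulr_gt0 //; try lra.
  rewrite ler_wpM2l // ?mulr_ge0 //; try lra.
have step5 : B * \sum_(k < K) a k <= \sum_(n < N) X n.
  rewrite step3 mulr_sumr; apply: ler_sum => k _.
  by rewrite mulrC ler_wpM2l.
rewrite mulrAC ler_pdivrMr //.
apply: (le_trans step5); by rewrite mulrC.
Qed.
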